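(* Let $R$ be the ring of integers of a nonarchimedean local field of characteristic not $2$ in which $2$ is a prime element, and let $L\cong\langle 1,-1\rangle$ be a binary $R$-lattice. Then $Q(L) = R^\times\cup 4R$, and \[ Q^\ast(L) = \begin{cases} R^\times\cup 4R & \text{if } R\ne\mathbb{Z}_2,\\ R^\times\cup 8R & \text{if } R=\mathbb{Z}_2.\end{cases} \]
   Context: $\langle 1,-1\rangle$ is the $R$-lattice with Gram matrix $\operatorname{diag}(1,-1)$, with quadratic form $Q(v)=B(v,v)$. $Q(L)=\{Q(v):v\in L\}$ and $Q^\ast(L)=\{Q(v): v\in L \text{ primitive}\}$, where $v$ is primitive if $Rv$ is a direct summand of $L$. *)

(* Defs.v *)
From HB Require Import structures.
From mathcomp Require Import all_boot all_order all_algebra.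
Set Implicit Arguments. Unset Strict Implicit. Unset Printing Implicit Defensive.
Import Order.TTheory GRing.Theory Num.Theory.
Local Open Scope ring_scope.

Definition dvdr (R : comPzRingType) (a b : R) : Prop := exists c : R, b = a * c.

Definition prime_elt (R : idomainType) (p : R) : Prop :=
  p != 0 /\ p \isn't a GRing.unit /\
  forall a b : R, dvdr p (a * b) -> dvdr p a \/ dvdr p b.

Definition uniformizer (R : idomainType) (pi : R) : Prop :=
  pi != 0 /\ pi \isn't a GRing.unit /\
  forall x : R, x != 0 -> exists (u : R) (n : nat), u \is a GRing.unit /\ x = u * pi ^+ n.

(* R is a complete discrete valuation ring with finite residue field, i.e.
   the valuation ring (ring of integers) of a nonarchimedean local field. *)
Definition local_ring_of_integers (R : idomainType) : Prop :=
  exists pi : R,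
    uniformizer pi /\
    (* completeness for the pi-adic topology *)
    (forall x : nat -> R,
        (forall n, dvdr (pi ^+ n) (x n.+1 - x n)) ->
        exists l : R, forall n, dvdr (pi ^+ n) (l - x n)) /\
    (* finite residue field R / pi R *)
    (exists s : seq R, forall x : R, exists2 y, y \in s & dvdr pi (x - y)).

Definition char_not_2 (R : idomainType) : Prop := (2 : R) != 0.

(* R = Z_2 : for R as above with 2 a prime element (so R is unramified over
   Z_2), R is isomorphic to Z_2 iff its residue field R/2R is F_2. *)
Definition is_Z2 (R : idomainType) : Prop :=
  forall x : R, dvdr 2 x \/ dvdr 2 (x - 1).

(* The free lattice R^2 with Gram matrix G, quadratic form Q(v) = B(v,v). *)
Definition qf (R : comPzRingType) (G : 'M[R]_2) (v : 'rV[R]_2) : R :=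
  (v *m G *m v^T) 0 0.

Definition diag1m1 (R : comPzRingType) : 'M[R]_2 :=
  diag_mx (\row_(i < 2) (-1) ^+ i).

Definition isometric_to_1m1 (R : comUnitRingType) (G : 'M[R]_2) : Prop :=
  exists P : 'M[R]_2, P \in unitmx /\ G = P *m diag1m1 R *m P^T.

Definition submodule (R : comPzRingType) (N : 'rV[R]_2 -> Prop) : Prop :=
  N 0 /\ (forall u w, N u -> N w -> N (u + w)) /\
  (forall (r : R) u, N u -> N (r *: u)).

(* v is primitive: R v is a direct summand of L = R^2. *)
Definition primitive (R : comPzRingType) (v : 'rV[R]_2) : Prop :=
  exists N : 'rV[R]_2 -> Prop, submodule N /\
    (forall w, exists (r : R) (n : 'rV[R]_2), N n /\ w = r *: v + n) /\
    (forall r : R, N (r *: v) -> r *: v = 0).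

Definition QL (R : comPzRingType) (G : 'M[R]_2) (a : R) : Prop :=
  exists v : 'rV[R]_2, qf G v = a.
Definition QLstar (R : comPzRingType) (G : 'M[R]_2) (a : R) : Prop :=
  exists v : 'rV[R]_2, primitive v /\ qf G v = a.

(* Main.v *)
Require Import Defs.
From HB Require Import structures.
From mathcomp Require Import all_boot all_order all_algebra.
From mathcomp Require Import ring.
From mathcomp Require Import boolp.
From Stdlib Require Import Classical.
Import Order.TTheory GRing.Theory Num.Theory.
Local Open Scope ring_scope.

Section Arith.
Variable R : idomainType.
Hypothesis h2 : prime_elt (2:R).
Local Notation d2 := (@dvdr R 2).

Lemma d2_0 : d2 0. Proof. by exists 0; rewrite mulr0. Qed.
Lemma d2D x y : d2 x -> d2 y -> d2 (x + y).
Proof. by case=> a -> [b ->]; exists (a + b); rewrite mulrDr. Qed.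
Lemma d2B x y : d2 x -> d2 y -> d2 (x - y).
Proof. by case=> a -> [b ->]; exists (a - b); rewrite mulrBr. Qed.
Lemma d2Ml x y : d2 x -> d2 (x * y).
Proof. by case=> a ->; exists (a * y); rewrite mulrA. Qed.
Lemma d2Mr x y : d2 y -> d2 (x * y).
Proof. by move=> h; rewrite mulrC; apply: d2Ml. Qed.
Lemma d2_2x x : d2 (2 * x). Proof. by exists x. Qed.
Lemma d2M x y : d2 (x * y) -> d2 x \/ d2 y.
Proof. by case: h2 => _ [_ ]; apply. Qed.
Lemma nd2_1 : ~ d2 1.
Proof.
case=> c hc; case: h2 => _ [/negP hu _]; apply: hu.
by apply/unitrP; exists c; rewrite mulrC -hc.
Qed.
Lemma unit_nd2 x : x \is a GRing.unit -> ~ d2 x.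
Proof. by move=> hx h; apply: nd2_1; have := @d2Ml x x^-1 h; rewrite mulrV. Qed.

Lemma d2_sq x y : d2 (x ^+ 2 - y ^+ 2) -> d2 (x - y).
Proof.
have -> : x ^+ 2 - y ^+ 2 = (x - y) * (x + y) by ring.
case/d2M => // h.
have -> : x - y = (x + y) - 2 * y by ring.
by apply: d2B => //; apply: d2_2x.
Qed.

Lemma d2_pi (pi : R) : uniformizer pi -> d2 pi.
Proof.
case=> _ [_ hpi].
have [u [m [hu e]]] := hpi 2 (proj1 h2).
have hm : d2 (u * pi ^+ m) by rewrite -e; exists 1; rewrite mulr1.
case: m e hm => [|m] e hm.
  by case: h2 => _ [/negP[]]; rewrite e expr0 mulr1.
case/d2M: hm => [/(@unit_nd2 u hu)//|].
clear e; elim: m => [|m IH]; first by rewrite expr1.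
by rewrite exprS => /d2M [] //.
Qed.

Lemma nd2_unit (pi : R) : uniformizer pi -> forall x, ~ d2 x -> x \is a GRing.unit.
Proof.
move=> hu x hx; have hp := @d2_pi pi hu; case: hu => _ [_ hpi].
have x0 : x != 0 by apply/eqP => e; apply: hx; rewrite e; apply: d2_0.
have [u [n [hu' e]]] := hpi x x0.
case: n e => [|n] e; first by rewrite e expr0 mulr1.
by exfalso; apply: hx; rewrite e exprSr; apply: d2Mr; apply: d2Mr.
Qed.

Lemma squares (s : seq R) : (forall x, exists2 y, y \in s & d2 (x - y)) ->
  forall a, exists u, d2 (a - u ^+ 2).
Proof.
move=> hs.
pose P x := fun y => `[< d2 (x - y) >].
pose rep x := find (P x) s.
have repP x : (rep x < size s)%N /\ d2 (x - nth 0 s (rep x)).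
  case: (hs x) => y ys hy.
  have hh : has (P x) s by apply/hasP; exists y => //; apply/asboolP.
  split; first by rewrite -has_find.
  exact: (asboolP _ (nth_find 0 hh)).
have rep_eq x y : d2 (x - y) -> rep x = rep y.
  move=> hxy; apply: eq_find => z; rewrite /P.
  apply/asboolP/asboolP => h.
    have -> : y - z = (x - z) - (x - y) by ring.
    by apply: d2B.
  have -> : x - z = (x - y) + (y - z) by ring.
  by apply: d2D.
pose A := [seq i <- iota 0 (size s) | rep (nth 0 s i) == i].
pose g i := rep ((nth 0 s i) ^+ 2).
have repA x : rep x \in A.
  rewrite mem_filter mem_iota /= add0n (repP x).1 andbT.
  by apply/eqP/esym/rep_eq; apply: (repP x).2.
have Ai i : i \in A -> rep (nth 0 s i) = i by rewrite mem_filter => /andP[/eqP].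
have ginj : {in A &, injective g}.
  move=> i j hi hj hg; rewrite -(Ai i hi) -(Ai j hj); apply: rep_eq; apply: d2_sq.
  have h1 := (repP (nth 0 s i ^+ 2)).2.
  have h3 := (repP (nth 0 s j ^+ 2)).2.
  rewrite /g in hg; rewrite hg in h1.
  have -> : nth 0 s i ^+ 2 - nth 0 s j ^+ 2 =
    (nth 0 s i ^+ 2 - nth 0 s (rep (nth 0 s j ^+ 2))) -
    (nth 0 s j ^+ 2 - nth 0 s (rep (nth 0 s j ^+ 2))) by ring.
  by apply: d2B.
have gA : {subset map g A <= A} by move=> _ /mapP[i _ ->]; apply: repA.
have uA : uniq A by apply: filter_uniq; apply: iota_uniq.
have [_ eqA] := uniq_min_size (s1 := map g A) (s2 := A) ltac:(by rewrite map_inj_in_uniq) gA ltac:(by rewrite size_map).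
move=> a; have : rep a \in map g A by rewrite eqA; apply: repA.
case/mapP => i _ hi; exists (nth 0 s i).
have h3 := (repP a).2; rewrite hi in h3.
have h4 := (repP (nth 0 s i ^+ 2)).2.
have -> : a - nth 0 s i ^+ 2 = (a - nth 0 s (g i)) - (nth 0 s i ^+ 2 - nth 0 s (g i)) by ring.
by apply: d2B.
Qed.

Lemma qfD (v : 'rV[R]_2) : qf (diag1m1 R) v = v 0 0 ^+ 2 - v 0 1 ^+ 2.
Proof.
rewrite /qf /diag1m1 mul_mx_diag !mxE !big_ord_recl big_ord0 !mxE /=.
have -> : lift ord0 ord0 = 1 :> 'I_2 by apply/val_inj.
rewrite /bump /= expr0 expr1; ring.
Qed.

Lemma qfP (P : 'M[R]_2) v : qf (P *m diag1m1 R *m P^T) v = qf (diag1m1 R) (v *m P).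
Proof. by rewrite /qf trmx_mul !mulmxA. Qed.

Definition mkv (x y : R) : 'rV[R]_2 := \row_(i < 2) (if (i : nat) == 0%N then x else y).
Lemma mkv0 (x y : R) : mkv x y 0 0 = x. Proof. by rewrite mxE. Qed.
Lemma mkv1 (x y : R) : mkv x y 0 1 = y. Proof. by rewrite mxE. Qed.
Lemma ord2P (i : 'I_2) : i = 0 \/ i = 1.
Proof. by case: i => [[|[|//]]] ?; [left|right]; apply/val_inj. Qed.

Variable pi : R.
Hypothesis hpi : uniformizer pi.

Definition ND (v : 'rV[R]_2) := ~ (d2 (v 0 0) /\ d2 (v 0 1)).

Lemma ND_prim v : ND v -> primitive v.
Proof.
move=> hv.
have [k hk] : exists k : 'I_2, v 0 k \is a GRing.unit.
  case: (classic (d2 (v 0 0))) => h0.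
    by exists 1; apply: (@nd2_unit pi hpi) => h1; apply: hv.
  by exists 0; apply: (@nd2_unit pi hpi).
exists (fun w => w 0 k = 0); split; first split.
  by rewrite mxE.
split; first by move=> u w hu hw; rewrite mxE hu hw addr0.
  by move=> r u hu; rewrite mxE hu mulr0.
split.
  move=> w; exists (w 0 k / v 0 k), (w - (w 0 k / v 0 k) *: v); split.
    by rewrite !mxE divrK // subrr.
  by rewrite addrC subrK.
move=> r; rewrite mxE => h.
have -> : r = 0 by have := congr1 (fun z => z / v 0 k) h; rewrite mulrK // mul0r.
by rewrite scale0r.
Qed.

Lemma prim_ND v : primitive v -> v = 0 \/ ND v.
Proof.
move=> [N [[N0 [ND' NZ]] [span triv]]].
case: (classic (ND v)) => h; [by right | left].
have [[c0 e0] [c1 e1]] : d2 (v 0 0) /\ d2 (v 0 1) by apply: NNPP.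
have ev : v = 2 *: mkv c0 c1.
  apply/rowP => i; rewrite !mxE.
  by case: (ord2P i) => ->; rewrite ?e0 ?e1.
have [r [n [hn hv']]] := span (mkv c0 c1).
have e : 2 *: n = (1 - 2 * r) *: v.
  rewrite scalerBl scale1r -scalerA [X in X - _]ev hv' scalerDr.
  by rewrite addrAC subrr add0r.
have hz := triv (1 - 2 * r); rewrite -e in hz; have := hz (NZ 2 n hn).
rewrite e => h0.
have hne : 1 - 2 * r != 0.
  apply/eqP => h1; apply: nd2_1; exists r; by apply/eqP; rewrite -subr_eq0 h1.
apply/rowP => i; have := congr1 (fun m : 'rV[R]_2 => m 0 i) h0; rewrite !mxE => /eqP.
by rewrite mulf_eq0 (negbTE hne) /= => /eqP.
Qed.

Lemma ND_mul v (M : 'M[R]_2) : ND (v *m M) -> ND v.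
Proof.
move=> h [[a ea] [b eb]]; apply: h.
have l1 : lift ord0 ord0 = 1 :> 'I_2 by apply/val_inj.
split; [exists (a * M 0 0 + b * M 1 0) | exists (a * M 0 1 + b * M 1 1)];
  rewrite !mxE big_ord_recl big_ord1 l1 -[ord0]/(0 : 'I_2) ea eb mulrDr !mulrA //.
Qed.


Lemma d2_of_pi (z : R) : dvdr pi z -> d2 z.
Proof. by have [c ->] := @d2_pi pi hpi; case=> d ->; rewrite -mulrA; apply: d2_2x. Qed.

Lemma Qunit (x y : R) : ~ d2 (x - y) -> (x ^+ 2 - y ^+ 2) \is a GRing.unit.
Proof.
move=> h.
have -> : x ^+ 2 - y ^+ 2 = (x - y) * (x + y) by ring.
have hp : ~ d2 (x + y).
  move=> hxy; apply: h.
  have -> : x - y = (x + y) - 2 * y by ring.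
  by apply: d2B => //; apply: d2_2x.
by rewrite unitrM (@nd2_unit pi hpi _ h) (@nd2_unit pi hpi _ hp).
Qed.

Lemma QA (x y : R) : (x ^+ 2 - y ^+ 2) \is a GRing.unit \/ dvdr 4 (x ^+ 2 - y ^+ 2).
Proof.
case: (classic (d2 (x - y))) => h; last by left; apply: Qunit.
right; case: h => s hs; exists (s * (s + y)).
have -> : x ^+ 2 - y ^+ 2 = (x - y) * ((x - y) + 2 * y) by ring.
by rewrite hs; ring.
Qed.

Lemma QC : is_Z2 R -> forall x y : R, ~ (d2 x /\ d2 y) ->
  (x ^+ 2 - y ^+ 2) \is a GRing.unit \/ dvdr 8 (x ^+ 2 - y ^+ 2).
Proof.
move=> hZ x y hxy.
case: (classic (d2 (x - y))) => h; last by left; apply: Qunit.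
right; case: h => s hs.
have hy : ~ d2 y.
  move=> hy; apply: hxy; split => //.
  have -> : x = (x - y) + y by ring.
  by apply: d2D => //; exists s.
have [//|[e he]] := hZ y.
have ex : x = 2 * s + y by rewrite -hs; ring.
have ey : y = 2 * e + 1 by rewrite -he; ring.
rewrite ex ey.
case: (hZ s) => [[f ->]|[f hf]].
  by exists (f * (2 * f + 2 * e + 1)); ring.
have -> : s = 2 * f + 1 by rewrite -hf; ring.
by exists ((2 * f + 1) * (f + e + 1)); ring.
Qed.

Lemma Bu (a u : R) : a \is a GRing.unit -> d2 (a - u ^+ 2) ->
  exists x y, ~ (d2 x /\ d2 y) /\ x ^+ 2 - y ^+ 2 = a.
Proof.
move=> ha [k hk].
have hu : u \is a GRing.unit.
  apply: (@nd2_unit pi hpi) => hu; apply: (@unit_nd2 a ha).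
  have -> : a = (a - u ^+ 2) + u * u by rewrite expr2; ring.
  by rewrite hk; apply: d2D; [apply: d2_2x | apply: d2Ml].
exists ((a - k) * u^-1), (- k * u^-1); split.
  case=> hx hy; apply: (@unit_nd2 a ha).
  have e : a = ((a - k) * u^-1) ^+ 2 - (- k * u^-1) ^+ 2.
    have e1 : a - 2 * k = u ^+ 2 by rewrite -hk; ring.
    have -> : ((a - k) * u^-1) ^+ 2 - (- k * u^-1) ^+ 2 = a * (u^-1 ^+ 2 * (a - 2 * k)) by ring.
    by rewrite e1 -exprMn mulVr // expr1n mulr1.
  by rewrite e !expr2; apply: d2B; apply: d2Ml.
have e1 : a - 2 * k = u ^+ 2 by rewrite -hk; ring.
have -> : ((a - k) * u^-1) ^+ 2 - (- k * u^-1) ^+ 2 = a * (u^-1 ^+ 2 * (a - 2 * k)) by ring.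
by rewrite e1 -exprMn mulVr // expr1n mulr1.
Qed.

Lemma B4 (a : R) : dvdr 4 a -> exists x y, x ^+ 2 - y ^+ 2 = a.
Proof. by case=> b ->; exists (1 + b), (b - 1); ring. Qed.

Lemma B4' (a : R) : ~ is_Z2 R -> dvdr 4 a -> exists x y, ~ (d2 x /\ d2 y) /\ x ^+ 2 - y ^+ 2 = a.
Proof.
move=> hZ [b ->].
case: (classic (d2 (b - 1))) => hb; last first.
  by exists (1 + b), (b - 1); split => [[_ h]|]; [apply: hb | ring].
have [c [hc0 hc1]] : exists c, ~ d2 c /\ ~ d2 (c - 1).
  apply: NNPP => hn; apply: hZ => x.
  case: (classic (d2 x)) => h; [by left | right].
  by apply: NNPP => h'; apply: hn; exists x.
have hc := @nd2_unit pi hpi c hc0.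
exists (c + b * c^-1), (b * c^-1 - c); split; last first.
  have -> : (c + b * c^-1) ^+ 2 - (b * c^-1 - c) ^+ 2 = 4 * b * (c * c^-1) by ring.
  by rewrite mulrV // mulr1.
case=> hx _; apply: hc1.
have e : (c + b * c^-1) * c - (b - 1) - 2 * 1 = (c - 1) * ((c - 1) + 2 * 1).
  by rewrite mulrDl -mulrA mulVr // mulr1; ring.
have : d2 ((c - 1) * ((c - 1) + 2 * 1)).
  by rewrite -e; apply: d2B; [apply: d2B => //; apply: d2Ml | apply: d2_2x].
case/d2M => // h.
have -> : c - 1 = (c - 1 + 2 * 1) - 2 * 1 by ring.
by apply: d2B => //; apply: d2_2x.
Qed.

Lemma B8 (a : R) : dvdr 8 a -> exists x y, ~ (d2 x /\ d2 y) /\ x ^+ 2 - y ^+ 2 = a.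
Proof.
case=> b ->; exists (1 + 2 * b), (2 * b - 1); split; last by ring.
case=> h _; apply: nd2_1.
suff : d2 ((1 + 2 * b) - 2 * b) by rewrite addrK.
by apply: d2B => //; apply: d2_2x.
Qed.

Lemma QL_iff (P : 'M[R]_2) : P \in unitmx -> forall a,
  QL (P *m diag1m1 R *m P^T) a <-> exists x y, x ^+ 2 - y ^+ 2 = a.
Proof.
move=> hP a; split.
  by case=> v <-; exists ((v *m P) 0 0), ((v *m P) 0 1); rewrite qfP qfD.
case=> x [y <-]; exists (mkv x y *m invmx P).
by rewrite qfP qfD mulmxKV // mkv0 mkv1.
Qed.

Lemma QLs1 (P : 'M[R]_2) : P \in unitmx -> forall a,
  QLstar (P *m diag1m1 R *m P^T) a ->
  a = 0 \/ exists x y, ~ (d2 x /\ d2 y) /\ x ^+ 2 - y ^+ 2 = a.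
Proof.
move=> hP a [v [pv <-]].
case: (@prim_ND v pv) => [->|nv]; first by left; rewrite /qf !mul0mx mxE.
right; exists ((v *m P) 0 0), ((v *m P) 0 1); split; last by rewrite qfP qfD.
change (ND (v *m P)); apply: (@ND_mul (v *m P) (invmx P)); by rewrite mulmxK.
Qed.

Lemma QLs2 (P : 'M[R]_2) : P \in unitmx -> forall a,
  (exists x y, ~ (d2 x /\ d2 y) /\ x ^+ 2 - y ^+ 2 = a) ->
  QLstar (P *m diag1m1 R *m P^T) a.
Proof.
move=> hP a [x [y [nd <-]]]; exists (mkv x y *m invmx P); split.
  apply: ND_prim; apply: (@ND_mul _ P); rewrite mulmxKV //.
  by rewrite /ND mkv0 mkv1.
by rewrite qfP qfD mulmxKV // mkv0 mkv1.
Qed.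

End Arith.

Theorem lemma5p1 (R : idomainType) (G : 'M[R]_2) :
  local_ring_of_integers R -> char_not_2 R -> prime_elt (2 : R) ->
  isometric_to_1m1 G ->
  (forall a : R, QL G a <-> (a \is a GRing.unit \/ dvdr 4 a)) /\
  (~ is_Z2 R -> forall a : R, QLstar G a <-> (a \is a GRing.unit \/ dvdr 4 a)) /\
  (is_Z2 R -> forall a : R, QLstar G a <-> (a \is a GRing.unit \/ dvdr 8 a)).
Proof.
move=> [pi [hpi [_ [s hs]]]] _ h2 [P [hP ->]].
have hs2 : forall x, exists2 y, y \in s & dvdr 2 (x - y).
  move=> x; have [y ys hy] := hs x; exists y => //.
  exact: (d2_of_pi _ h2 _ hpi _ hy).
have sq := squares _ h2 _ hs2.
have d40 : dvdr (4 : R) 0 by exists 0; rewrite mulr0.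
have d80 : dvdr (8 : R) 0 by exists 0; rewrite mulr0.
split; [|split].
- move=> a; rewrite (QL_iff _ _ hP); split.
    by case=> x [y <-]; apply: (QA _ h2 _ hpi).
  case=> [ha|h4]; last exact: B4.
  have [u hu] := sq a.
  by have [x [y [_ e]]] := Bu _ h2 _ hpi _ _ ha hu; exists x, y.
- move=> hZ a; split.
    case/(QLs1 _ h2 _ hP) => [->|[x [y [_ <-]]]]; first by right.
    by apply: (QA _ h2 _ hpi).
  move=> h; apply: (QLs2 _ h2 _ hpi _ hP).
  case: h => [ha|h4]; last exact: (B4' _ h2 _ hpi a hZ h4).
  by have [u hu] := sq a; apply: (Bu _ h2 _ hpi _ _ ha hu).
- move=> hZ a; split.
    case/(QLs1 _ h2 _ hP) => [->|[x [y [nd <-]]]]; first by right.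
    by apply: (QC _ h2 _ hpi hZ).
  move=> h; apply: (QLs2 _ h2 _ hpi _ hP).
  case: h => [ha|h8]; last exact: (B8 _ h2 a h8).
  apply: (Bu _ h2 _ hpi _ 1 ha); rewrite expr1n.
  case: (hZ a) => // h; exfalso; exact: (unit_nd2 _ h2 _ ha h).
Qed.
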